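(* Let $\delta\ge3$ and let $K^{(\delta)}$ be a $\delta$-PHO with potential coefficients $v_h=v^{(\delta)}_h$. Put $V(q)=\tfrac12(q_1^2+q_2^2)+V^{(\delta)}(q)$. There exist real constants $(\alpha,\beta,\beta',\gamma,\gamma')\ne(0,0,0,0,0)$ such that for all $q\in\mathbb R^2$ $$\Big(\tfrac{\partial^2V}{\partial q_2^2}-\tfrac{\partial^2V}{\partial q_1^2}\Big)(-2\alpha q_1q_2-\beta'q_2-\beta q_1+\gamma)+2\tfrac{\partial^2V}{\partial q_1\partial q_2}(\alpha q_2^2-\alpha q_1^2+\beta q_2-\beta'q_1+\gamma')+\tfrac{\partial V}{\partial q_1}(6\alpha q_2+3\beta)-\tfrac{\partial V}{\partial q_2}(6\alpha q_1+3\beta')=0$$ if and only if: (I) for odd $\delta\ge5$: $\operatorname{rank}\mathcal M(K^{(\delta)})=1$; (II) for even $\delta\ge4$: either $\operatorname{rank}\mathcal M(K^{(\delta)})=1$, or $v_0\ne0$, $v_{2h}=\binom{\delta/2}{h}\binom{\delta}{2h}^{-1}v_0$ for $h=1,\dots,\delta/2$, and $v_{2h'-1}=0$ for $h'=1,\dots,\delta/2$; (III) for $\delta=3$: either $\operatorname{rank}\mathcal M(K^{(3)})=1$, or $$\operatorname{rank}\begin{pmatrix}7v_1&-v_0+6v_2&-2v_1+5v_3\\-5v_0+2v_2&-6v_1+v_3&-7v_2\end{pmatrix}=1.$$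
   Context: A $\delta$-PHO is the Hamiltonian $K^{(\delta)}(q,p)=\tfrac12\sum_{j=1}^2(p_j^2+q_j^2)+V^{(\delta)}(q)$ on $\mathbb R^4$, with $V^{(\delta)}(q)=\sum_{h=0}^{\delta}v^{(\delta)}_h\binom{\delta}{h}q_1^hq_2^{\delta-h}$, real coefficients, $V^{(\delta)}\not\equiv0$. $\mathcal M(K^{(\delta)})$ is the $2\times(\delta-1)$ real matrix whose $(h+1)$-st column, $h=0,\dots,\delta-2$, is $\big(v^{(\delta)}_h-v^{(\delta)}_{h+2},\ 2v^{(\delta)}_{h+1}\big)^T$. The displayed identity is the Bertrand–Darboux condition; by the classical Bertrand–Darboux theorem it is equivalent to the existence of a first integral quadratic in the momenta (independent of the Hamiltonian). *)

(* Defs.v *)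
From HB Require Import structures.
From mathcomp Require Import all_boot all_order all_algebra.
From mathcomp Require Import reals.
From mathcomp Require Import mpoly.
Set Implicit Arguments. Unset Strict Implicit. Unset Printing Implicit Defensive.
Import Order.TTheory GRing.Theory Num.Theory.
Local Open Scope ring_scope.

Definition i1 : 'I_2 := ord0.
Definition i2 : 'I_2 := ord_max.

Section PHO.
Variable R : realType.

Definition Vdelta (d : nat) (v : nat -> R) : {mpoly R[2]} :=
  \sum_(h < d.+1) (v h * 'C(d, h)%:R) *: ('X_i1 ^+ h * 'X_i2 ^+ (d - h)).

Definition Vfull (d : nat) (v : nat -> R) : {mpoly R[2]} :=
  2^-1 *: ('X_i1 ^+ 2 + 'X_i2 ^+ 2) + Vdelta d v.

Definition BD_lhs (d : nat) (v : nat -> R) (a b b' c c' : R) : {mpoly R[2]} :=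
  let V := Vfull d v in
  let q1 : {mpoly R[2]} := 'X_i1 in
  let q2 : {mpoly R[2]} := 'X_i2 in
  let V11 := (V^`M(i1))^`M(i1) in
  let V22 := (V^`M(i2))^`M(i2) in
  let V12 := (V^`M(i2))^`M(i1) in
  (V22 - V11) * ((-2 * a)%:MP * q1 * q2 - b'%:MP * q2 - b%:MP * q1 + c%:MP)
  + 2%:MP * V12 * (a%:MP * q2 ^+ 2 - a%:MP * q1 ^+ 2 + b%:MP * q2 - b'%:MP * q1 + c'%:MP)
  + V^`M(i1) * ((6 * a)%:MP * q2 + (3 * b)%:MP)
  - V^`M(i2) * ((6 * a)%:MP * q1 + (3 * b')%:MP).

Definition Mmat (d : nat) (v : nat -> R) : 'M[R]_(2, d.-1) :=
  \matrix_(i < 2, j < d.-1)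
    (if i == 0 :> nat then v j - v j.+2 else 2 * v j.+1).

Definition M3 (v : nat -> R) : 'M[R]_(2, 3) :=
  \matrix_(i < 2, j < 3)
    [fun k : nat => 0 with
       0%N |-> (if i == 0 :> nat then 7 * v 1%N else -5 * v 0%N + 2 * v 2%N),
       1%N |-> (if i == 0 :> nat then - v 0%N + 6 * v 2%N else -6 * v 1%N + v 3%N),
       2%N |-> (if i == 0 :> nat then -2 * v 1%N + 5 * v 3%N else -7 * v 2%N)] (j : nat).

End PHO.

(* Main.v *)
Require Import Defs.
From HB Require Import structures.
From mathcomp Require Import all_boot all_order all_algebra.
From mathcomp Require Import reals.
From mathcomp Require Import mpoly.
From mathcomp Require Import ring lra zify.
Import Order.TTheory GRing.Theory Num.Theory.
Local Open Scope ring_scope.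
Set Implicit Arguments. Unset Strict Implicit.

Section S.
Variable R : realType.

Lemma poly_all0 (p : {poly R}) : (forall t, p.[t] = 0) -> p = 0.
Proof.
move=> H; apply: (@roots_geq_poly_eq0 _ p [seq i%:R | i <- iota 0 (size p)]).
- by apply/allP=> x _; rewrite /root H.
- rewrite map_inj_uniq ?iota_uniq //; by move=> i j /eqP; rewrite eqr_nat => /eqP.
- by rewrite size_map size_iota.
Qed.

Lemma dX (i j : 'I_2) : ('X_i : {mpoly R[2]})^`M(j) = (i == j)%:R%:MP.
Proof.
rewrite mderivX mnm1E; case: eqP => [->|_].
  have -> : (U_(j) - U_(j) = 0)%MM by apply/mnmP=> k; rewrite !mnmE subnn.
  by rewrite mpolyX0 scale1r.
by rewrite scale0r.
Qed.

Lemma dXn (i j : 'I_2) n : (('X_i : {mpoly R[2]}) ^+ n)^`M(j) =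
   ((i == j) * n)%:R *: 'X_i ^+ n.-1.
Proof.
elim: n => [|n IH]; first by rewrite expr0 mderivC muln0 scale0r.
rewrite exprS mderivM IH dX; case: n IH => [|n] IH.
  by rewrite muln0 scale0r mulr0 addr0 expr0 mulr1 muln1 /= -mul_mpolyC mulr1.
by rewrite mul_mpolyC -scalerAr -exprS -scalerDl -natrD -mulnS.
Qed.

Lemma i12 : (i1 == i2) = false. Proof. by []. Qed.
Lemma i21 : (i2 == i1) = false. Proof. by []. Qed.

Lemma D1 n (w : nat -> R) :
  (Vdelta n.+1 w)^`M(i1) = n.+1%:R *: Vdelta n (fun k => w k.+1).
Proof.
rewrite /Vdelta linear_sum big_ord_recl /= scaler_sumr.
rewrite mderivZ mderivM !dXn i21 eqxx !mul0n !muln0 !scale0r mul0r mulr0 addr0 scaler0 add0r.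
apply: eq_bigr => k _.
rewrite mderivZ mderivM !dXn i21 eqxx mul0n scale0r mulr0 addr0 mul1n /=.
rewrite -scalerAl scalerA scalerA subSS; congr (_ *: _).
rewrite /bump /= add1n.
have := mul_bin_diag n.+1 k => /= /(congr1 (fun t => t%:R : R)); rewrite !natrM => H.
by rewrite -mulrA [_ * k.+1%:R]mulrC -H; ring.
Qed.

Lemma D2 n (w : nat -> R) :
  (Vdelta n.+1 w)^`M(i2) = n.+1%:R *: Vdelta n w.
Proof.
rewrite /Vdelta linear_sum big_ord_recr /= scaler_sumr.
rewrite mderivZ mderivM !dXn i12 eqxx !mul0n subnn !muln0 !scale0r mulr0 addr0 mul0r scaler0 addr0.
apply: eq_bigr => k _.
rewrite mderivZ mderivM !dXn i12 eqxx mul0n scale0r mul0r add0r mul1n /=.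
rewrite -scalerAr scalerA scalerA; congr (_ *: _); last first.
  by rewrite subSn ?leq_ord.
have := mul_bin_down n.+1 k => /= /(congr1 (fun t => t%:R : R)); rewrite !natrM => H.
by rewrite -mulrA [_ * (n.+1 - k)%:R]mulrC -H; ring.
Qed.

Definition P n (w : nat -> R) (x y : R) : R :=
  \sum_(k < n.+1) (w k * 'C(n, k)%:R) * (x ^+ k * y ^+ (n - k)).

Lemma evV n w q : (Vdelta n w).@[q] = P n w (q i1) (q i2).
Proof.
rewrite /Vdelta /P (big_morph _ (mevalD q) (meval0 q)); apply: eq_bigr => k _.
by rewrite mevalZ mevalM !rmorphXn /= !mevalXU.
Qed.

Lemma two_neq0 : (2 : R) != 0. Proof. by rewrite pnatr_eq0. Qed.

Lemma dV1 m (v : nat -> R) : (Vfull m.+2 v)^`M(i1) = 'X_i1 + m.+2%:R *: Vdelta m.+1 (fun k => v k.+1).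
Proof.
rewrite /Vfull mderivD mderivZ mderivD !dXn D1 i21 eqxx mul0n scale0r addr0 /= expr1.
by rewrite scalerA mulVf ?two_neq0 // scale1r.
Qed.

Lemma dV2 m (v : nat -> R) : (Vfull m.+2 v)^`M(i2) = 'X_i2 + m.+2%:R *: Vdelta m.+1 v.
Proof.
rewrite /Vfull mderivD mderivZ mderivD !dXn D2 i12 eqxx mul0n scale0r add0r /= expr1.
by rewrite scalerA mulVf ?two_neq0 // scale1r.
Qed.

Lemma dV11 m (v : nat -> R) : (Vfull m.+2 v)^`M(i1)^`M(i1) =
   1 + (m.+2 * m.+1)%:R *: Vdelta m (fun k => v k.+2).
Proof. by rewrite dV1 mderivD mderivZ dX D1 eqxx scalerA natrM. Qed.

Lemma dV22 m (v : nat -> R) : (Vfull m.+2 v)^`M(i2)^`M(i2) =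
   1 + (m.+2 * m.+1)%:R *: Vdelta m v.
Proof. by rewrite dV2 mderivD mderivZ dX D2 eqxx scalerA natrM. Qed.

Lemma dV21 m (v : nat -> R) : (Vfull m.+2 v)^`M(i2)^`M(i1) =
   (m.+2 * m.+1)%:R *: Vdelta m (fun k => v k.+1).
Proof. by rewrite dV2 mderivD mderivZ dX D1 i21 add0r scalerA natrM. Qed.

Definition Ef m (v : nat -> R) (a b b' c c' x y : R) : R :=
  let d := m.+2%:R in
  let H1 := d * P m.+1 (fun k => v k.+1) x y in
  let H2 := d * P m.+1 v x y in
  let H11 := d * m.+1%:R * P m (fun k => v k.+2) x y in
  let H12 := d * m.+1%:R * P m (fun k => v k.+1) x y in
  let H22 := d * m.+1%:R * P m v x y in
  (H22 - H11) * (-2*a*x*y - b'*y - b*x + c) + 2 * H12 * (a*y^+2 - a*x^+2 + b*y - b'*x + c')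
  + (x + H1)*(6*a*y + 3*b) - (y + H2)*(6*a*x + 3*b').

Lemma evBD m (v : nat -> R) a b b' c c' q :
  (BD_lhs m.+2 v a b b' c c').@[q] = Ef m v a b b' c c' (q i1) (q i2).
Proof.
rewrite /BD_lhs dV11 dV22 dV21 dV1 dV2 /Ef.
rewrite !(mevalD, mevalB, mevalM, mevalZ, mevalC, mevalXU, mevalN, meval1, evV, rmorphXn, natrM) /=.
ring.
Qed.

Lemma P_hom n w t x y : P n w (t * x) (t * y) = t ^+ n * P n w x y.
Proof.
rewrite /P mulr_sumr; apply: eq_bigr => k _.
have -> : t ^+ n = t ^+ k * t ^+ (n - k) by rewrite -exprD subnKC // -ltnS.
rewrite !exprMn; ring.
Qed.

Lemma P_ext n w w' x y : (forall k, (k <= n)%N -> w k = w' k) -> P n w x y = P n w' x y.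
Proof. by move=> H; apply: eq_bigr => k _; rewrite H // -ltnS. Qed.

Lemma P_add n f g x y : P n (fun k => f k + g k) x y = P n f x y + P n g x y.
Proof. by rewrite /P -big_split; apply: eq_bigr => k _ /=; ring. Qed.

Lemma P_scale n (al : R) f x y : P n (fun k => al * f k) x y = al * P n f x y.
Proof. by rewrite /P mulr_sumr; apply: eq_bigr => k _ /=; ring. Qed.

Lemma P_y0 n w x : P n w x 0 = w n * x ^+ n.
Proof.
rewrite /P big_ord_recr /= subnn expr0 mulr1 binn mulr1 big1 ?add0r //.
by move=> k _; rewrite expr0n subn_eq0 leqNgt ltn_ord /= !mulr0.
Qed.

Lemma P_poly n w x : P n w x 1 = (\poly_(k < n.+1) (w k * 'C(n, k)%:R)).[x].
Proof. by rewrite horner_poly; apply: eq_bigr => k _; rewrite expr1n mulr1. Qed.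

Lemma P_coef n w : (forall x, P n w x 1 = 0) -> forall k, (k <= n)%N -> w k = 0.
Proof.
move=> H k hk.
have H0 : \poly_(k < n.+1) (w k * 'C(n, k)%:R) = 0 by apply: poly_all0 => t; rewrite -P_poly H.
move/polyP: H0 => /(_ k).
rewrite coef_poly coef0 ltnS hk => /eqP; rewrite mulf_eq0 pnatr_eq0 (negbTE (lt0n_neq0 _)) ?bin_gt0 // orbF.
by move/eqP.
Qed.

Lemma P_pascal n w x y :
  P n.+1 w x y = x * P n (fun k => w k.+1) x y + y * P n w x y.
Proof.
rewrite /P big_ord_recl /=.
under eq_bigr => k _ do rewrite /bump /= add1n binS natrD mulrDr mulrDl.
rewrite big_split /= addrA addrC mulr_sumr; congr (_ + _).
  by apply: eq_bigr => k _; rewrite subSS exprS; ring.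
have -> : w 0%N * 'C(n.+1, 0)%:R * (x ^+ 0 * y ^+ (n.+1 - 0)) +
  \sum_(i < n.+1) w i.+1 * 'C(n, i.+1)%:R * (x ^+ i.+1 * y ^+ (n.+1 - i.+1))
   = \sum_(i < n.+2) w i * 'C(n, i)%:R * (x ^+ i * y ^+ (n.+1 - i)).
  by rewrite [in RHS]big_ord_recl /= !bin0.
rewrite big_ord_recr /= bin_small // mulr0 mul0r addr0 mulr_sumr.
by apply: eq_bigr => k _; rewrite subSn ?leq_ord // exprS; ring.
Qed.
End S.

Section S3.
Variable R : realType.

Lemma I2cases (k : 'I_2) : k = i1 \/ k = i2.
Proof. by case: k => [[|[|n]] H]; [left|right|]; try apply/val_inj. Qed.

Lemma sum_I2 (F : 'I_2 -> R) : \sum_(k < 2) F k = F i1 + F i2.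
Proof. rewrite !big_ord_recl big_ord0 addr0; congr (_ + F _); exact/val_inj. Qed.

Definition rv (c c' : R) : 'rV[R]_2 := \row_k (if k == i1 then c else c').

Lemma rv_mul p (A : 'M[R]_(2,p)) c c' j : (rv c c' *m A) ord0 j = c * A i1 j + c' * A i2 j.
Proof. by rewrite mxE sum_I2 !mxE eqxx. Qed.

Lemma rv_eq0 c c' : (rv c c' == 0) = ((c, c') == (0, 0)).
Proof.
apply/eqP/eqP => [H|[-> ->]].
  have := congr1 (fun M : 'rV[R]_2 => M ord0 i1) H; have := congr1 (fun M : 'rV[R]_2 => M ord0 i2) H.
  by rewrite !mxE eqxx /= => -> ->.
by apply/rowP => k; rewrite !mxE; case: ifP.
Qed.

Lemma rank1P p (A : 'M[R]_(2,p)) : A != 0 ->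
  (\rank A = 1%N <-> exists c c' : R, (c, c') != (0,0) /\
       forall j, c * A i1 j + c' * A i2 j = 0).
Proof.
move=> A0; split => [rk|[c [c' [nz H]]]].
  have kr : \rank (kermx A) = 1%N by rewrite mxrank_ker rk.
  have kz : kermx A != 0 by rewrite -mxrank_eq0 kr.
  have [i ri] : exists i, row i (kermx A) != 0.
    case: (boolP (row i1 (kermx A) == 0)) => [/eqP r1|r1]; last by exists i1.
    case: (boolP (row i2 (kermx A) == 0)) => [/eqP r2|r2]; last by exists i2.
    by move: kz => /eqP []; apply/row_matrixP => k; rewrite row0; case: (I2cases k) => ->.
  set x := row i (kermx A) in ri.
  have xA : x *m A = 0 by rewrite /x -row_mul mulmx_ker row0.
  exists (x ord0 i1), (x ord0 i2); split.
    apply: contra ri => /eqP [h1 h2]; apply/eqP/rowP => k.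
    by case: (I2cases k) => ->; rewrite [RHS]mxE ?h1 ?h2.
  move=> j; have := congr1 (fun M : 'rV[R]_p => M ord0 j) xA; rewrite [RHS]mxE mxE sum_I2. by [].
have xA : rv c c' *m A = 0 by apply/rowP => j; rewrite rv_mul H mxE.
have : (rv c c' <= kermx A)%MS by apply/sub_kermxP.
move/mxrankS; rewrite rank_rV rv_eq0 nz mxrank_ker => h.
have : \rank A != 0%N by rewrite mxrank_eq0.
have := rank_leq_row A; lia.
Qed.
End S3.

Section S4.
Variable R : realType.

Lemma ext_t m (al be ga la : R) :
  (forall t : R, t ^+ m.+2 * al + t ^+ m.+1 * be + t ^+ m * ga + t * la = 0) ->
  forall k, al * (k == m.+2)%:R + be * (k == m.+1)%:R + ga * (k == m)%:R + la * (k == 1)%:R = 0.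
Proof.
move=> H k.
have p0 : (al *: 'X^(m.+2) + be *: 'X^(m.+1) + ga *: 'X^m + la *: 'X : {poly R}) = 0.
  apply: poly_all0 => t; rewrite !hornerD !hornerZ !hornerXn hornerX -[RHS](H t); ring.
have := congr1 (fun p : {poly R} => p`_k) p0.
by rewrite !coefD !coefZ !coefXn coefX coef0.
Qed.

Lemma neqF (a b : nat) : a <> b -> (a == b) = false.
Proof. by move=> h; apply/eqP. Qed.

Lemma ext_t2 m (al be ga la : R) : (2 <= m)%N ->
  (forall t : R, t ^+ m.+2 * al + t ^+ m.+1 * be + t ^+ m * ga + t * la = 0) ->
  [/\ al = 0, be = 0, ga = 0 & la = 0].
Proof.
move=> hm H; have E := @ext_t m al be ga la H.
have := E m.+2; have := E m.+1; have := E m; have := E 1%N.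
rewrite !eqxx !(@neqF m.+2 m.+1) ?(@neqF m.+2 m) ?(@neqF m.+1 m.+2) ?(@neqF m.+1 m)
  ?(@neqF m m.+2) ?(@neqF m m.+1) ?(@neqF 1 m.+2) ?(@neqF 1 m.+1) ?(@neqF 1 m)
  ?(@neqF m.+2 1) ?(@neqF m.+1 1) ?(@neqF m 1); try lia.
rewrite /=. move=> h1 h2 h3 h4. split; lra.
Qed.

Lemma ext_t1 (al be ga la : R) :
  (forall t : R, t ^+ 3 * al + t ^+ 2 * be + t ^+ 1 * ga + t * la = 0) ->
  [/\ al = 0, be = 0 & ga + la = 0].
Proof.
move=> H; have E := @ext_t 1 al be ga la H.
have := E 3%N; have := E 2%N; have := E 1%N => /=.
move=> h1 h2 h3; split; lra.
Qed.
End S4.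

Section S5.
Variable R : realType.

Definition Q m (v : nat -> R) x y := y * P m.+1 (fun k => v k.+1) x y - x * P m.+1 v x y.

Definition qp m (v : nat -> R) : {poly R} :=
  \poly_(k < m.+2) (v k.+1 * 'C(m.+1, k)%:R) - 'X * \poly_(k < m.+2) (v k * 'C(m.+1, k)%:R).

Lemma Q_hom m v t x y : Q m v (t * x) (t * y) = t ^+ m.+2 * Q m v x y.
Proof. rewrite /Q !P_hom !exprS; ring. Qed.

Lemma Q_1 m v x : Q m v x 1 = (qp m v).[x].
Proof. by rewrite /Q /qp hornerD hornerN hornerM hornerX -!P_poly mul1r. Qed.

Lemma qp_coef m v k : (qp m v)`_k =
  (if (k < m.+2)%N then v k.+1 * 'C(m.+1, k)%:R else 0) -
  (if k == 0%N then 0 else if (k.-1 < m.+2)%N then v k.-1 * 'C(m.+1, k.-1)%:R else 0).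
Proof. by rewrite coefB coefXM !coef_poly. Qed.

Lemma Qz_iff m v : (forall x y, Q m v x y = 0) <-> qp m v = 0.
Proof.
split => [H|H x y].
  by apply: poly_all0 => t; rewrite -Q_1 H.
have [->|y0] := eqVneq y 0.
  rewrite /Q P_y0 mul0r sub0r.
  have := congr1 (fun p : {poly R} => p`_(m.+2)) H; rewrite qp_coef coef0 ltnn /= ltnSn binn mulr1.
  by rewrite sub0r => /eqP; rewrite oppr_eq0 => /eqP h; rewrite P_y0 h !mul0r mulr0 oppr0.
have -> : x = y * (x / y) by rewrite mulrC divfK.
by rewrite -[y in Q _ _ _ y]mulr1 Q_hom Q_1 H horner0 mulr0.
Qed.

Lemma Cnz n k : (k <= n)%N -> ('C(n, k)%:R : R) != 0.
Proof. by move=> h; rewrite pnatr_eq0 -lt0n bin_gt0. Qed.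

Lemma seq_zero m v : qp m v = 0 -> v 0%N = 0 -> forall k, (k <= m.+2)%N -> v k = 0.
Proof.
move=> H v0.
have C k : (k < m.+2)%N -> v k.+1 * 'C(m.+1, k)%:R =
    (if k == 0%N then 0 else v k.-1 * 'C(m.+1, k.-1)%:R).
  move=> hk; have := congr1 (fun p : {poly R} => p`_k) H; rewrite qp_coef coef0 hk.
  case: (k =P 0%N) => [->|nk] /=; first by rewrite subr0.
  rewrite (leq_ltn_trans (leq_pred k) hk) => /eqP; rewrite subr_eq0 => /eqP //.
suff S : forall j, (j.+1 <= m.+2)%N -> v j = 0 /\ v j.+1 = 0.
  move=> k hk; case: k hk => [|k] hk //; by case: (S k hk).
elim => [_|j IH hj].
  split => //; have := C 0%N isT => /=.
  by move/eqP; rewrite mulf_eq0 (negbTE (Cnz _)) // orbF => /eqP.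
have [h1 h2] := IH (ltnW hj); split => //.
have := C j.+1 hj => /=; rewrite h1 mul0r => /eqP; rewrite mulf_eq0 (negbTE (Cnz _)) ?orbF.
  by move/eqP.
by rewrite -ltnS.
Qed.

Lemma qp_rel m v k : qp m v = 0 -> (0 < k)%N -> (k < m.+2)%N ->
  v k.+1 * 'C(m.+1, k)%:R = v k.-1 * 'C(m.+1, k.-1)%:R.
Proof.
move=> H k0 hk; have := congr1 (fun p : {poly R} => p`_k) H; rewrite qp_coef coef0 hk.
rewrite (negbTE (lt0n_neq0 k0)) (leq_ltn_trans (leq_pred k) hk).
by move/eqP; rewrite subr_eq0 => /eqP.
Qed.

Lemma qp_top m v : qp m v = 0 -> v m.+1 = 0.
Proof.
move=> H; have := congr1 (fun p : {poly R} => p`_(m.+2)) H; rewrite qp_coef coef0 ltnn /= ltnSn binn mulr1.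
by rewrite sub0r => /eqP; rewrite oppr_eq0 => /eqP.
Qed.

Lemma seq_odd m v : odd m -> qp m v = 0 -> v 0%N = 0.
Proof.
move=> om H.
have S : forall j, (j.*2 <= m.+1)%N -> v (m.+1 - j.*2)%N = 0.
  elim => [_|j IH hj]; first by rewrite subn0 qp_top.
  have hk0 : (0 < m - j.*2)%N by move: hj; rewrite doubleS; lia.
  have := qp_rel H hk0; rewrite ltnS (leq_trans (leq_subr _ _) (leqnSn _)) => /(_ isT).
  have -> : (m - j.*2).+1 = (m.+1 - j.*2)%N by move: hj; rewrite doubleS; lia.
  rewrite IH; last by move: hj; rewrite doubleS; lia.
  rewrite mul0r => /esym/eqP; rewrite mulf_eq0 (negbTE (Cnz _)) ?orbF; last by lia.
  have -> : (m - j.*2).-1 = (m.+1 - j.+1.*2)%N by rewrite doubleS; lia.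
  by move/eqP.
have [p hp] : exists p, m.+1 = p.*2.
  exists (m.+1)./2; rewrite -{1}(odd_double_half m.+1) /= om /= add0n //.
have := S p; rewrite -hp subnn; apply; by [].
Qed.

Definition rho m (k : nat) : R :=
  if odd k then 0 else 'C((m.+2)./2, k./2)%:R / 'C(m.+2, k)%:R.

Lemma rho_odd m k : odd k -> rho m k = 0.
Proof. by rewrite /rho => ->. Qed.

Lemma rho_even m h : rho m h.*2 = 'C((m.+2)./2, h)%:R / 'C(m.+2, h.*2)%:R.
Proof. by rewrite /rho odd_double half_double. Qed.

Lemma rho_id M h : (h <= M)%N ->
  'C((M.*2).+1, (h.*2).+1)%:R * ('C(M.+1, h.+1)%:R / 'C((M.*2).+2, (h.+1).*2)%:R)
  = 'C((M.*2).+1, h.*2)%:R * ('C(M.+1, h)%:R / 'C((M.*2).+2, h.*2)%:R) :> R.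
Proof.
move=> hM.
have i1' := mul_bin_diag (M.*2).+2 (h.*2).+1.
have i2' := mul_bin_down (M.*2).+2 (h.*2).
have i3' := mul_bin_left M.+1 h.
move: i1' i2' i3' => /= /(congr1 (fun t => t%:R : R)) e1 /(congr1 (fun t => t%:R : R)) e2 /(congr1 (fun t => t%:R : R)) e3.
rewrite !natrM in e1 e2 e3.
rewrite natrB in e2; last by lia.
rewrite natrB in e3; last by lia.
have c1 : ('C((M.*2).+2, (h.+1).*2)%:R : R) != 0 by apply: Cnz; lia.
have c2 : ('C((M.*2).+2, h.*2)%:R : R) != 0 by apply: Cnz; lia.
have D : ((M.*2).+2%:R : R) != 0 by rewrite pnatr_eq0.
have H1 : ((h.+1)%:R : R) != 0 by rewrite pnatr_eq0.
rewrite doubleS in c1 *.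
have -> : 'C((M.*2).+1, (h.*2).+1)%:R = (h.*2).+2%:R * 'C((M.*2).+2, (h.*2).+2)%:R / (M.*2).+2%:R :> R.
  by rewrite -e1 mulrC mulKf.
have -> : 'C((M.*2).+1, h.*2)%:R = ((M.*2).+2%:R - (h.*2)%:R) * 'C((M.*2).+2, h.*2)%:R / (M.*2).+2%:R :> R.
  by rewrite -e2 mulrC mulKf.
have -> : 'C(M.+1, h.+1)%:R = ((M.+1)%:R - h%:R) * 'C(M.+1, h)%:R / (h.+1)%:R :> R.
  by rewrite -e3 mulrC mulKf.
set B1 := ('C(M.*2.+2, h.*2.+2)%:R : R) in c1 *; set B2 := ('C(M.*2.+2, h.*2)%:R : R) in c2 *; set B3 := ('C(M.+1, h)%:R : R).
rewrite -!mul2n !mulrS !natrM.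
field.
have hm := ler0n R M; have hh := ler0n R h.
rewrite c1 c2 !lt0r_neq0 //; lra.
Qed.

Lemma qp_rho M : qp (M.*2) (rho (M.*2)) = 0.
Proof.
apply/polyP => k; rewrite qp_coef coef0.
have hd : ((M.*2).+2)./2 = M.+1 by rewrite -doubleS half_double.
have [o|e] := boolP (odd k).
  have hk : k = ((k./2).*2).+1 by rewrite -[k in LHS]odd_double_half o.
  move: (k./2) hk => h -> /=.
  case: (leqP h M) => hM.
    rewrite ifT; last by lia.
    rewrite ifT; last by lia.
    rewrite -doubleS !rho_even hd mulrC [X in _ - X]mulrC.
    by apply/eqP; rewrite subr_eq0; apply/eqP; apply: rho_id.
  rewrite ifF; last by lia.
  by rewrite ifF ?subrr //; lia.
have hk : k = (k./2).*2 by rewrite -[k in LHS]odd_double_half (negbTE e).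
move: (k./2) hk => h ->.
rewrite (@rho_odd _ (h.*2).+1); last by rewrite /= odd_double.
rewrite mul0r if_same.
case: h => [|h] //=; first by rewrite subrr.
rewrite (@rho_odd _ (h.*2).+1); last by rewrite /= odd_double.
by rewrite mul0r if_same subrr.
Qed.

Lemma qp_lin m v w (c : R) : qp m (fun k => v k - c * w k) = qp m v - c *: qp m w.
Proof.
apply/polyP => k; rewrite qp_coef [RHS]coefB coefZ !qp_coef.
case: ifP => _; case: eqP => _; rewrite ?mulr0 ?subr0 //; try case: ifP => _; ring.
Qed.
End S5.

Section S6.
Variable R : realType.

Definition Af m (v : nat -> R) x y := 2 * m.+2%:R * m.+4%:R * Q m v x y.
Definition Bf m (v : nat -> R) (b b' x y : R) :=
  let d := m.+2%:R in
  let H1 := d * P m.+1 (fun k => v k.+1) x y in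
  let H2 := d * P m.+1 v x y in
  let H11 := d * m.+1%:R * P m (fun k => v k.+2) x y in
  let H12 := d * m.+1%:R * P m (fun k => v k.+1) x y in
  let H22 := d * m.+1%:R * P m v x y in
  (H22 - H11) * (- b' * y - b * x) + 2 * H12 * (b * y - b' * x) + 3 * b * H1 - 3 * b' * H2.
Definition Cw (v : nat -> R) (c c' : R) k := c * (v k - v k.+2) + 2 * c' * v k.+1.
Definition Cf m (v : nat -> R) c c' x y := m.+2%:R * m.+1%:R * P m (Cw v c c') x y.

Lemma PCw m (v : nat -> R) c c' x y : P m (Cw v c c') x y =
  c * P m v x y - c * P m (fun k => v k.+2) x y + 2 * c' * P m (fun k => v k.+1) x y.
Proof. by rewrite /P /Cw !mulr_sumr -sumrB -big_split /=; apply: eq_bigr => k _; ring. Qed.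

Lemma Ef_dec m v a b b' c c' t x y :
  Ef m v a b b' c c' (t * x) (t * y) = t ^+ m.+2 * (a * Af m v x y) + t ^+ m.+1 * Bf m v b b' x y
     + t ^+ m * Cf m v c c' x y + t * (3 * b * x - 3 * b' * y).
Proof.
rewrite /Ef /Af /Bf /Cf /Q PCw !P_pascal /= !P_hom !exprS.

ring.
Qed.
End S6.

Section S7.
Variable R : realType.

Definition BDf m (v : nat -> R) := exists a b b' c c' : R,
  (a, b, b', c, c') != (0, 0, 0, 0, 0) /\ forall x y, Ef m v a b b' c c' x y = 0.

Lemma BD_equiv m (v : nat -> R) :
  (exists a b b' c c' : R, (a, b, b', c, c') != (0, 0, 0, 0, 0) /\
      forall q : 'I_2 -> R, (BD_lhs m.+2 v a b b' c c').@[q] = 0) <-> BDf m v.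
Proof.
split => [[a [b [b' [c [c' [nz H]]]]]]|[a [b [b' [c [c' [nz H]]]]]]];
  exists a, b, b', c, c'; split => //.
  move=> x y; have := H (fun i => if i == i1 then x else y).
  by rewrite evBD eqxx i21.
by move=> q; rewrite evBD.
Qed.

Definition KM m (v : nat -> R) := exists c c' : R, (c, c') != (0, 0) /\
  forall k, (k <= m)%N -> Cw v c c' k = 0.

Lemma rankM m (v : nat -> R) : Mmat m.+2 v != 0 ->
  (\rank (Mmat m.+2 v) = 1%N <-> KM m v).
Proof.
move=> nz; rewrite rank1P //; split => [[c [c' [cz H]]]|[c [c' [cz H]]]];
  exists c, c'; split => //.
  move=> k hk; have := H (Ordinal (hk : (k < (m.+2).-1)%N)).
  by rewrite !mxE /= /Cw => <-; ring.
move=> j; rewrite !mxE /=.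
have := H j (ltn_ord j); rewrite /Cw => <-; ring.
Qed.

Lemma P0 n x y : P n (fun _ => 0 : R) x y = 0.
Proof. by rewrite /P big1 // => k _; rewrite !mul0r. Qed.

Lemma Mnz m (v : nat -> R) : (0 < m)%N -> (exists x y, P m.+2 v x y != 0) -> Mmat m.+2 v != 0.
Proof.
move=> m0 [x [y nz]]; apply: contra nz => /eqP M0.
have E j : (j <= m)%N -> v j = v j.+2 /\ v j.+1 = 0.
  move=> hj; have := congr1 (fun M : 'M[R]_(2, (m.+2).-1) => M i1 (Ordinal (hj : (j < (m.+2).-1)%N))) M0.
  have := congr1 (fun M : 'M[R]_(2, (m.+2).-1) => M i2 (Ordinal (hj : (j < (m.+2).-1)%N))) M0.
  rewrite !mxE /= => /eqP; rewrite mulf_eq0 (negbTE (@two_neq0 R)) /= => /eqP h1 /eqP; rewrite subr_eq0 => /eqP h2.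
  by [].
have Z k : (k <= m.+2)%N -> v k = 0.
  move=> hk; case: k hk => [|k] hk.
    by rewrite (E 0%N isT).1; case: (E 1%N m0).
  have [hkm|hkm] := leqP k m; first by case: (E k hkm).
  have -> : k.+1 = m.+2 by lia.
  rewrite -(E m (leqnn _)).1; have := (E m.-1 (leq_pred _)).2.
  by rewrite prednK.
apply/eqP; rewrite (P_ext (w' := fun _ => 0)) ?P0 //.
Qed.
End S7.

Section S8.
Variable R : realType.

Lemma Ef1 m (v : nat -> R) a b b' c c' x y : Ef m v a b b' c c' x y =
   a * Af m v x y + Bf m v b b' x y + Cf m v c c' x y + (3 * b * x - 3 * b' * y).
Proof. by have := Ef_dec m v a b b' c c' 1 x y; rewrite !mul1r !expr1n !mul1r. Qed.

Lemma Bf0 m (v : nat -> R) x y : Bf m v 0 0 x y = 0.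
Proof. rewrite /Bf /=; ring. Qed.

Lemma Cf0 m (v : nat -> R) c c' x y : (forall k, (k <= m)%N -> Cw v c c' k = 0) -> Cf m v c c' x y = 0.
Proof. by move=> H; rewrite /Cf (P_ext (w' := fun _ => 0)) ?P0 ?mulr0. Qed.

Lemma KM_BD m (v : nat -> R) : KM m v -> BDf m v.
Proof.
move=> [c [c' [nz H]]]; exists 0, 0, 0, c, c'; split.
  by move: nz; apply: contra; rewrite !xpair_eqE eqxx /=.
by move=> x y; rewrite Ef1 Bf0 Cf0 //; ring.
Qed.

Lemma Q_BD m (v : nat -> R) : qp m v = 0 -> BDf m v.
Proof.
move=> H; exists 1, 0, 0, 0, 0; split.
  by rewrite !xpair_eqE oner_eq0.
move=> x y; rewrite Ef1 Bf0 Cf0; last by move=> k _; rewrite /Cw; ring.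
by rewrite /Af (proj2 (Qz_iff m v) H); ring.
Qed.

Lemma nat_nz n : (n.+1%:R : R) != 0. Proof. by rewrite pnatr_eq0. Qed.

Lemma BD_ge4 m (v : nat -> R) : (2 <= m)%N -> BDf m v -> KM m v \/ qp m v = 0.
Proof.
move=> hm [a [b [b' [c [c' [nz H]]]]]].
have D x y := ext_t2 hm (fun t => etrans (esym (Ef_dec m v a b b' c c' t x y)) (H _ _)).
have b0 : b = 0 by have [_ _ _] := D 1 0; lra.
have b'0 : b' = 0 by have [_ _ _] := D 0 1; lra.
have [a0|a0] := eqVneq a 0.
  left; exists c, c'; split.
    move: nz; apply: contra => /eqP [-> ->]; by rewrite a0 b0 b'0.
  apply: P_coef => x; have [_ _ h _] := D x 1.
  by move: h => /eqP; rewrite /Cf !mulf_eq0 !(negbTE (nat_nz _)) /= => /eqP.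
right; apply/Qz_iff => x y; have [h _ _ _] := D x y.
by move: h => /eqP; rewrite /Af !mulf_eq0 (negbTE a0) (negbTE (@two_neq0 R)) !(negbTE (nat_nz _)) /= => /eqP.
Qed.
End S8.

Section S9.
Variable R : realType.

Lemma P1E (w : nat -> R) x y : P 1 w x y = w 0%N * y + w 1%N * x.
Proof. rewrite /P !big_ord_recr big_ord0 /= bin0 binn subn0 subnn; ring. Qed.

Lemma P2E (w : nat -> R) x y : P 2 w x y = w 0%N * y ^+ 2 + 2 * w 1%N * x * y + w 2%N * x ^+ 2.
Proof.
rewrite /P !big_ord_recr big_ord0 /= bin0 binn subn0 subnn (_ : 'C(2, 1) = 2%N) // (_ : (2 - 1 = 1)%N) //.
ring.
Qed.

Definition e0 (v : nat -> R) b b' := b * (7 * v 1%N) + b' * (-5 * v 0%N + 2 * v 2%N).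
Definition e1 (v : nat -> R) b b' := b * (- v 0%N + 6 * v 2%N) + b' * (-6 * v 1%N + v 3%N).
Definition e2 (v : nat -> R) b b' := b * (-2 * v 1%N + 5 * v 3%N) + b' * (-7 * v 2%N).

Lemma B3 (v : nat -> R) b b' x y :
  Bf 1 v b b' x y = 3 * e0 v b b' * y ^+ 2 + 6 * e1 v b b' * x * y + 3 * e2 v b b' * x ^+ 2.
Proof. rewrite /Bf /e0 /e1 /e2 /= !P1E !P2E; ring. Qed.

Definition KM3 (v : nat -> R) := exists b b' : R, (b, b') != (0, 0) /\
  [/\ e0 v b b' = 0, e1 v b b' = 0 & e2 v b b' = 0].

Lemma rankM3 (v : nat -> R) : M3 v != 0 -> (\rank (M3 v) = 1%N <-> KM3 v).
Proof.
move=> nz; rewrite rank1P //; split => [[b [b' [bz H]]]|[b [b' [bz [h0 h1 h2]]]]];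
  exists b, b'; split => //.
  have := H (Ordinal (isT : (0 < 3)%N)); have := H (Ordinal (isT : (1 < 3)%N));
  have := H (Ordinal (isT : (2 < 3)%N)).
  rewrite !mxE /= /e0 /e1 /e2 => h2 h1 h0; split => //.
move=> [[|[|[|j]]] hj]; rewrite !mxE /=.
- by rewrite -h0 /e0.
- by rewrite -h1 /e1.
- by rewrite -h2 /e2.
- by [].
Qed.

Lemma M3nz (v : nat -> R) : (exists x y, P 3 v x y != 0) -> M3 v != 0.
Proof.
move=> [x [y nz]]; apply: contra nz => /eqP M0.
have ent i j : M3 v i j = 0 by rewrite M0 mxE.
have := ent i1 (Ordinal (isT : (0 < 3)%N)); have := ent i2 (Ordinal (isT : (0 < 3)%N)).
have := ent i1 (Ordinal (isT : (2 < 3)%N)); have := ent i2 (Ordinal (isT : (2 < 3)%N)).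
rewrite !mxE /= => h1 h2 h3 h4.
have v1 : v 1%N = 0 by lra.
have v2 : v 2%N = 0 by lra.
have v0 : v 0%N = 0 by lra.
have v3 : v 3%N = 0 by lra.
by rewrite /P !big_ord_recr big_ord0 /= v0 v1 v2 v3; apply/eqP; ring.
Qed.
End S9.

Section S10.
Variable R : realType.

Lemma allz_P n (v : nat -> R) x y : (forall k, (k <= n)%N -> v k = 0) -> P n v x y = 0.
Proof. by move=> H; rewrite (P_ext (w' := fun _ => 0)) ?P0. Qed.

Lemma qp_contra m (v : nat -> R) : odd m -> (exists x y, P m.+2 v x y != 0) -> qp m v != 0.
Proof.
move=> om [x [y nz]]; apply: contra nz => /eqP H.
by rewrite allz_P // => k hk; apply: (seq_zero H) => //; apply: seq_odd H.
Qed.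

Lemma BD3_fwd (v : nat -> R) : (exists x y, P 3 v x y != 0) -> BDf 1 v -> KM 1 v \/ KM3 v.
Proof.
move=> Vnz [a [b [b' [c [c' [nz H]]]]]].
have D x y := ext_t1 (fun t => etrans (esym (Ef_dec 1 v a b b' c c' t x y)) (H _ _)).
have a0 : a = 0.
  have [//|a0] := eqVneq a 0; exfalso.
  have qz : qp 1 v = 0.
    apply/Qz_iff => x y; have [h _ _] := D x y.
    by move: h => /eqP; rewrite /Af !mulf_eq0 (negbTE a0) (negbTE (@two_neq0 R)) !(negbTE (@nat_nz R _)) /= => /eqP.
  by move: (qp_contra (m := 1) isT Vnz); rewrite qz eqxx.
have [bz|bz] := eqVneq (b, b') (0, 0).
  move: bz => [b0 b'0]; left; exists c, c'; split.
    move: nz; apply: contra => /eqP [-> ->]; by rewrite a0 b0 b'0.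
  apply: P_coef => x; have [_ _ h] := D x 1.
  move: h; rewrite b0 b'0 !(mul0r, mulr0) subr0 addr0 => /eqP; rewrite /Cf !mulf_eq0 !(negbTE (@nat_nz R _)) /= => /eqP.
  by [].
right; exists b, b'; split => //.
have [_ h01 _] := D 0 1; have [_ h10 _] := D 1 0; have [_ h11 _] := D 1 1.
move: h01 h10 h11; rewrite !B3 => h01 h10 h11.
split; rewrite ?expr1n ?expr0n /= in h01 h10 h11; lra.
Qed.

Lemma BD3_bwd (v : nat -> R) : (exists x y, P 3 v x y != 0) -> KM3 v -> BDf 1 v.
Proof.
move=> Vnz [b [b' [bz [h0 h1 h2]]]].
have Mn := Mnz (m := 1) isT Vnz.
have [r1|r1] := eqVneq (\rank (Mmat 3 v)) 1%N.
  by apply: KM_BD; apply/(rankM Mn).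
pose M : 'M[R]_2 := Mmat 3 v.
have uM : M \in unitmx.
  rewrite -row_free_unit /row_free.
  have e : \rank M = \rank (Mmat 3 v) by [].
  have hle := rank_leq_row M; have hnz : \rank M != 0%N by rewrite mxrank_eq0.
  rewrite e in hle hnz *; move: r1 hle hnz; lia.
pose r := rv (b' / 2) (- b / 2).
pose x := r *m invmx M.
have xM : x *m M = r by rewrite /x mulmxKV.
clearbody x.
have C0 : Cw v (x ord0 i1) (x ord0 i2) 0 = b' / 2.
  have := congr1 (fun A : 'rV[R]_2 => A ord0 i1) xM; rewrite mxE sum_I2 /M /r !mxE /= => <-.
  rewrite /Cw; ring.
have C1 : Cw v (x ord0 i1) (x ord0 i2) 1 = - b / 2.
  have := congr1 (fun A : 'rV[R]_2 => A ord0 i2) xM; rewrite mxE sum_I2 /M /r !mxE /= => <-.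
  rewrite /Cw; ring.
exists 0, b, b', (x ord0 i1), (x ord0 i2); split.
  by move: bz; apply: contra; rewrite !xpair_eqE /= => /andP [/andP [/andP [/andP [_ ->]] ->]].
move=> x0 y0; rewrite Ef1 B3 h0 h1 h2 /Cf P1E C0 C1.
by field.
Qed.
End S10.

Arguments rho {R}. Arguments rho_even {R}. Arguments rho_odd {R}. Arguments rho_id {R}.
Arguments nat_nz {R}. Arguments two_neq0 {R}.
Section S11.
Variable R : realType.

Lemma qp_scale m (w : nat -> R) (c : R) : qp m (fun k => c * w k) = c *: qp m w.
Proof.
apply/polyP => k; rewrite qp_coef coefZ !qp_coef.
case: ifP => _; case: eqP => _; rewrite ?mulr0 ?subr0 //; try case: ifP => _; ring.
Qed.

Lemma qp_ext m (v w : nat -> R) : (forall k, (k <= m.+2)%N -> v k = w k) -> qp m v = qp m w.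
Proof.
move=> H; apply/polyP => k; rewrite !qp_coef.
case: ifP => h1; [rewrite H //|]; case: eqP => h2 //; case: ifP => h3 //; rewrite H //; lia.
Qed.

Lemma rho0 m : rho m 0 = 1 :> R.
Proof. by rewrite (rho_even m 0) !bin0 divr1. Qed.

Lemma radial_iff M (v : nat -> R) : (exists x y, P (M.*2).+2 v x y != 0) ->
  (qp (M.*2) v = 0 <->
   [/\ v 0%N != 0,
       (forall h : nat, (1 <= h <= ((M.*2).+2)./2)%N ->
          v (2 * h)%N = 'C(((M.*2).+2)./2, h)%:R / 'C((M.*2).+2, 2 * h)%:R * v 0%N)
     & (forall h' : nat, (1 <= h' <= ((M.*2).+2)./2)%N -> v (2 * h').-1 = 0)]).
Proof.
move=> Vnz; have hd : ((M.*2).+2)./2 = M.+1 by rewrite -doubleS half_double.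
split => [H|[v0 He Ho]].
  have Hw : qp (M.*2) (fun k => v k - v 0%N * rho (M.*2) k) = 0.
    by rewrite qp_lin H qp_rho scaler0 subr0.
  have E k : (k <= (M.*2).+2)%N -> v k = v 0%N * rho (M.*2) k.
    move=> hk; apply/eqP; rewrite -subr_eq0; apply/eqP.
    by apply: (seq_zero Hw) => //; rewrite rho0 mulr1 subrr.
  split.
  - apply/negP => /eqP v0; move: Vnz => [x [y]]; apply/negP; rewrite negbK.
    by apply/eqP/allz_P => k hk; rewrite E // v0 mul0r.
  - move=> h /andP [h1 h2]; rewrite E; last by rewrite hd in h2; lia.
    by rewrite mul2n rho_even mulrC.
  - move=> h /andP [h1 h2]; rewrite E; last by rewrite hd in h2; lia.
    rewrite rho_odd ?mulr0 //; case: h h1 {h2} => // h _.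
    by rewrite mul2n doubleS /= odd_double.
have E k : (k <= (M.*2).+2)%N -> v k = v 0%N * rho (M.*2) k.
  move=> hk; have [o|e] := boolP (odd k).
    have hk' : k = (k./2).*2.+1 by rewrite -[k in LHS]odd_double_half o.
    rewrite rho_odd // mulr0 hk' -[(k./2).*2.+1]/((k./2).+1.*2).-1 -mul2n Ho //.
    rewrite hd; apply/andP; split => //; move: hk; rewrite hk'; lia.
  have hk' : k = (k./2).*2 by rewrite -[k in LHS]odd_double_half (negbTE e).
  move: hk' hk; move: (k./2) => h -> hk.
  case: h hk => [|h] hk; first by rewrite rho0 mulr1.
  rewrite -mul2n He; first by rewrite mul2n rho_even mulrC.
  rewrite hd; apply/andP; split => //; move: hk; lia.
rewrite (qp_ext (w := fun k => v 0%N * rho (M.*2) k)) //.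
by rewrite qp_scale qp_rho scaler0.
Qed.
End S11.

Unset Implicit Arguments.
Theorem mainTheorem2 (R : realType) (d : nat) (v : nat -> R) :
  (3 <= d)%N ->
  (exists q : 'I_2 -> R, (Vdelta d v).@[q] != 0) ->
  let BD := exists a b b' c c' : R,
      (a, b, b', c, c') != (0, 0, 0, 0, 0) /\
      forall q : 'I_2 -> R, (BD_lhs d v a b b' c c').@[q] = 0 in
  [/\ (odd d -> (5 <= d)%N -> (BD <-> \rank (Mmat d v) = 1%N)),
      (~~ odd d -> (4 <= d)%N ->
        (BD <-> \rank (Mmat d v) = 1%N \/
           [/\ v 0%N != 0,
               (forall h : nat, (1 <= h <= d./2)%N ->
                  v (2 * h)%N = 'C(d./2, h)%:R / 'C(d, 2 * h)%:R * v 0%N)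
             & (forall h' : nat, (1 <= h' <= d./2)%N -> v (2 * h').-1 = 0)]))
    & (d = 3%N -> (BD <-> \rank (Mmat d v) = 1%N \/ \rank (M3 v) = 1%N))].
Proof.
move=> hd [q qnz] BD.
have [m dm] : exists m, d = m.+2 by exists d.-2; lia.
subst d.
have Vnz : exists x y, P m.+2 v x y != 0 by exists (q i1), (q i2); rewrite -evV.
have Mn : Mmat m.+2 v != 0 by apply: Mnz => //; lia.
have BDe : BD <-> BDf m v by exact: BD_equiv.
split.
- move=> od h5; rewrite BDe (rankM Mn); split => [H|H]; last exact: KM_BD.
  have [//|qz] := BD_ge4 (m := m) (ltac:(lia)) H.
  have om : odd m by move: od => /=; rewrite negbK.
  by move: (qp_contra om Vnz); rewrite qz eqxx.
- move=> ev h4; have [M mM] : exists M, m = M.*2.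
    have em : ~~ odd m by move: ev => /=; rewrite negbK.
    by exists m./2; rewrite -[m in LHS]odd_double_half (negbTE em).
  subst m; rewrite BDe (rankM Mn) -(radial_iff Vnz); split => [H|[H|H]].
  + by apply: BD_ge4 H; lia.
  + exact: KM_BD.
  + exact: Q_BD.
- move=> d3; have m1 : m = 1%N by lia.
  subst m; rewrite BDe (rankM Mn) (rankM3 (M3nz Vnz)); split => [H|[H|H]].
  + exact: BD3_fwd.
  + exact: KM_BD.
  + exact: BD3_bwd.
Qed.
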